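(* Let $M$ be a finite item set, $n\ge1$, and $v$ a normalized monotone valuation on $M$. (1) If $v$ is subadditive, then $\mathrm{RMMS}(M,v,n)\ge \frac1n\,\mathrm{MMS}(M,v,n)$. (2) If $v$ is additive, then $\mathrm{RMMS}(M,v,n)\ge \rho_n\,\mathrm{MMS}(M,v,n)$, where $\rho_n=\frac{2n}{3n-1}$ for odd $n$ and $\rho_n=\frac{2n-2}{3n-4}$ for even $n$; in particular $\mathrm{RMMS}(M,v,n)\ge\frac23\,\mathrm{MMS}(M,v,n)$.
   Context: A valuation is a function $v:2^M\to\mathbb{R}_{\ge0}$ that is normalized ($v(\emptyset)=0$) and monotone. It is additive if $v(S)=\sum_{e\in S}v(\{e\})$ for all $S$, and subadditive if $v(S)+v(T)\ge v(S\cup T)$ for all $S,T\subseteq M$. $\mathrm{MMS}(M,v,n)$ is the maximum, over all partitions $P_1,\dots,P_n$ of $M$ into $n$ (possibly empty) parts, of $\min_j v(P_j)$. Residual maximin share: $\mathrm{RMMS}(M,v,n)$ is the largest real $t$ with the following property: for every $0\le k<n$ and every $k$ pairwise disjoint bundles $B_1,\dots,B_k\subseteq M$ with $v(B_j)<t$ for all $j$, the set $M\setminus(B_1\cup\dots\cup B_k)$ can be partitioned into $n-k$ bundles each of value (under $v$) at least $t$. *)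

(* Defs.v *)
From HB Require Import structures.
From mathcomp Require Import all_boot all_order all_algebra.
From mathcomp Require Import classical_sets boolp reals.
Set Implicit Arguments. Unset Strict Implicit. Unset Printing Implicit Defensive.
Import Order.TTheory GRing.Theory Num.Theory.
Local Open Scope ring_scope.

Section Defs.
Context {R : realType} {T : finType}.

Definition valuation (v : {set T} -> R) : Prop :=
  [/\ forall S, 0 <= v S, v finset.set0 = 0 &
      forall S U : {set T}, S \subset U -> v S <= v U].

Definition additive_valuation (v : {set T} -> R) : Prop :=
  forall S : {set T}, v S = \sum_(e in S) v [set e].

Definition subadditive_valuation (v : {set T} -> R) : Prop :=
  forall S U : {set T}, v (S :|: U) <= v S + v U.

(* A partition of M into n possibly empty (ordered) parts is given by an
   assignment f : T -> 'I_n; part j is [set x | f x == j]. *)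
Definition part n (f : {ffun T -> 'I_n}) (j : 'I_n) : {set T} :=
  [set x | f x == j].

Definition partition_min (v : {set T} -> R) n (f : {ffun T -> 'I_n}) : R :=
  inf [set v (part f j) | j in [set: 'I_n]]%classic.

Definition MMS (v : {set T} -> R) (n : nat) : R :=
  sup [set partition_min v f | f in [set: {ffun T -> 'I_n}]]%classic.

Definition rmms_prop (v : {set T} -> R) (n : nat) (t : R) : Prop :=
  forall (k : nat), (k < n)%N ->
  forall B : 'I_k -> {set T},
    (forall i j : 'I_k, i != j -> [disjoint B i & B j]) ->
    (forall j, v (B j) < t) ->
    exists g : {ffun T -> 'I_(n - k)},
      forall j : 'I_(n - k),
        t <= v ([set x in ~: \bigcup_(i < k) B i] :&: part g j).

Definition RMMS (v : {set T} -> R) (n : nat) : R :=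
  sup [set t | rmms_prop v n t]%classic.

Definition rho (n : nat) : R :=
  if odd n then (2 * n)%:R / (3 * n - 1)%:R
  else (2 * n - 2)%:R / (3 * n - 4)%:R.

End Defs.

(* Main.v *)
Require Import Defs.
From HB Require Import structures.
From mathcomp Require Import all_boot all_order all_algebra.
From mathcomp Require Import classical_sets boolp reals.
From mathcomp Require Import zify ring lra.
Import Order.TTheory GRing.Theory Num.Theory.
Set Implicit Arguments. Unset Strict Implicit. Unset Printing Implicit Defensive.
Local Open Scope ring_scope.

Section Glue.
Context {R : realType} {T : finType} (v : {set T} -> R) (Hv : valuation v).

Lemma v_ge0 (S : {set T}) : 0 <= v S. Proof. by case: Hv. Qed.
Lemma v_mono (S U : {set T}) : S \subset U -> v S <= v U. Proof. by case: Hv => _ _; apply. Qed.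

Lemma pmin_le n (f : {ffun T -> 'I_n}) j : partition_min v f <= v (part f j).
Proof.
rewrite /partition_min; apply: ge_inf; last by exists j.
by exists 0 => y [i _ <-]; apply: v_ge0.
Qed.

Lemma pmin_ge0 n (hn : (0 < n)%N) (f : {ffun T -> 'I_n}) : 0 <= partition_min v f.
Proof.
rewrite /partition_min; apply: lb_le_inf; first by exists (v (part f (Ordinal hn))), (Ordinal hn).
by move=> y [i _ <-]; apply: v_ge0.
Qed.

Lemma MMS_attained n (hn : (0 < n)%N) :
  exists f0 : {ffun T -> 'I_n}, MMS v n <= partition_min v f0 /\ 0 <= MMS v n.
Proof.
pose f1 : {ffun T -> 'I_n} := [ffun=> Ordinal hn].
pose f0 := Order.arg_max f1 xpredT (@partition_min R T v n).
have ub : ubound [set partition_min v f | f in [set: {ffun T -> 'I_n}]]%classic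
          (partition_min v f0).
  move=> y [f _ <-]; rewrite /f0; case: arg_maxP => //= g _; exact.
have hle : MMS v n <= partition_min v f0.
  by apply: ge_sup => //; exists (partition_min v f1), f1.
exists f0; split => //.
apply: (le_trans (pmin_ge0 hn f0)).
by apply: (ub_le_sup (ex_intro _ _ ub)); exists f0.
Qed.

Lemma RMMS_ge n (hn : (0 < n)%N) t : rmms_prop v n t -> t <= RMMS v n.
Proof.
move=> Ht; apply: (ub_le_sup); last exact: Ht.
exists (v [set: T]) => t' Ht'.
have [g Hg] := Ht' 0%N hn (fun i => match i with Ordinal _ p => False_rect _ (notF p) end)
  (fun i => match i with Ordinal _ p => False_rect _ (notF p) end)
  (fun i => match i with Ordinal _ p => False_rect _ (notF p) end).
have hn0 : (0 < n - 0)%N by rewrite subn0.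
apply: (le_trans (Hg (Ordinal hn0))); apply: v_mono; exact: finset.subsetT.
Qed.

Lemma final_step p (hp : (0 < p)%N) (U : {set T}) (h : T -> nat) t :
  (forall j, (j < p)%N -> t <= v (U :&: [set x | h x == j])) ->
  exists g : {ffun T -> 'I_p}, forall j : 'I_p, t <= v (U :&: part g j).
Proof.
move=> H.
have lt x : (minn (h x) p.-1 < p)%N by move: hp; lia.
exists [ffun x => Ordinal (lt x)] => j.
apply: (le_trans (H j (ltn_ord j))); apply: v_mono.
apply/fintype.subsetP => x; rewrite /part !inE => /andP[-> /eqP hx] /=; rewrite ffunE.
apply/eqP/val_inj => /=; rewrite hx; apply/minn_idPl.
by rewrite -ltnS prednK.
Qed.

End Glue.
Section Add.
Context {R : realType} {T : finType} (v : {set T} -> R) (Hv : valuation v).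

Lemma union_bound (sub : subadditive_valuation v) k (B : 'I_k -> {set T}) :
  v (\bigcup_(i < k) B i) <= \sum_(i < k) v (B i).
Proof.
apply: (big_ind2 (fun A r => v A <= r)).
- by case: Hv => _ -> _.
- by move=> A1 r1 A2 r2 h1 h2; apply: (le_trans (sub _ _)); apply: lerD.
- by [].
Qed.

Hypothesis Hadd : additive_valuation v.

Lemma add_sub : subadditive_valuation v.
Proof.
move=> A B; rewrite !Hadd (big_mkcond (fun e => e \in A)) (big_mkcond (fun e => e \in B)).
rewrite (big_mkcond (fun e => e \in A :|: B)) -big_split /=.
apply: ler_sum => e _; rewrite finset.in_setU.
have w0 := v_ge0 Hv [set e].
by case: (e \in A); case: (e \in B) => //=; lra.
Qed.

Lemma add_disj (A B : {set T}) : [disjoint A & B] -> v (A :|: B) = v A + v B.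
Proof.
move=> dAB; rewrite !Hadd (big_mkcond (fun e => e \in A)) (big_mkcond (fun e => e \in B)).
rewrite (big_mkcond (fun e => e \in A :|: B)) -big_split /=.
apply: eq_bigr => e _; rewrite finset.in_setU.
case eA: (e \in A); case eB: (e \in B) => //=; rewrite ?addr0 ?add0r //.
by rewrite (disjointFr dAB eA) in eB.
Qed.

End Add.
Definition cost {R : realType} (u x : R) := if x <= u then u - x else 0.

Lemma find_eq {T : finType} {I : eqType} (e : seq I) (P : I -> {set T}) x i0 i :
  uniq e -> (forall a b, a \in e -> b \in e -> a != b -> [disjoint P a & P b]) ->
  (i < size e)%N -> x \in P (nth i0 e i) -> find (fun a => x \in P a) e = i.
Proof.
move=> ue dis ie xi.
have hpi : (find (fun a => x \in P a) e <= i)%N.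
  rewrite leqNgt; apply/negP => /(before_find i0) /=; by rewrite xi.
have hs : (find (fun a => x \in P a) e < size e)%N by apply: leq_ltn_trans ie.
have hh : has (fun a => x \in P a) e by rewrite has_find.
have := nth_find i0 hh => /= xp.
apply/eqP; rewrite eqn_leq hpi /= leqNgt; apply/negP => lt.
have neq : nth i0 e (find (fun a => x \in P a) e) != nth i0 e i.
  by rewrite nth_uniq // neq_ltn lt.
by have := disjointFr (dis _ _ (mem_nth i0 hs) (mem_nth i0 ie) neq) xp; rewrite xi.
Qed.

Section Comb.
Context {R : realType} {T : finType} (v : {set T} -> R) (Hv : valuation v)
  (Hadd : additive_valuation v) (I : finType) (u t : R) (ht0 : 0 <= t) (htu : t <= u)
  (N : nat)
  (H4 : forall m g : nat, (m <= N)%N -> (m < 2 * g)%N -> (m%:R - g%:R) * t <= m%:R * (u - t)).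

Lemma cost_ge0 x : 0 <= cost u x.
Proof. by rewrite /cost; case: ifP => //; rewrite subr_ge0. Qed.

Lemma cost_lt x : x < t -> cost u x = u - x.
Proof. by move=> h; rewrite /cost ifT //; apply: le_trans htu; apply: ltW. Qed.

Lemma cost_le x : u - x <= cost u x.
Proof. by rewrite /cost; case: ifP => // /negbT; rewrite -ltNge subr_le0 => /ltW. Qed.

Lemma comb m : forall (S : {set I}) (Q : I -> {set T}) (g : nat),
  #|S| = m -> (m <= N)%N ->
  (forall i j, i \in S -> j \in S -> i != j -> [disjoint Q i & Q j]) ->
  \sum_(i in S) cost u (v (Q i)) < (m%:R - g%:R) * t ->
  exists h : T -> nat, forall j, (j < g)%N ->
    t <= v ((\bigcup_(i in S) Q i) :&: [set x | h x == j]).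
Proof.
elim: m => [|m IH] S Q g hS hN hD hc.
  exfalso; move: hc; rewrite (cards0_eq hS) big_set0.
  by rewrite sub0r mulNr oppr_gt0; have := mulr_ge0 (ler0n R g) ht0; lra.
case: g hc => [|g] hc; first by exists (fun=> 0%N).
have eS : (m.+1%:R - g.+1%:R : R) = m%:R - g%:R.
  by rewrite -!natr1; ring.
case: (boolP [exists i in S, t <= v (Q i)]).
-
  move/existsP => [i /andP[iS hi]].
  have hS' : #|S :\ i| = m by move: hS; rewrite (cardsD1 i) iS => -[].
  have [||h' Hh'] := IH (S :\ i) Q g hS' (ltnW hN).
  + by move=> a b; rewrite !in_setD1 => /andP[_ aS] /andP[_ bS]; apply: hD.
  + move: hc; rewrite (big_setD1 i iS) /= eS.
    by have := cost_ge0 (v (Q i)); lra.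
  exists (fun x => if x \in Q i then 0%N else (h' x).+1) => -[|j] hj.
  + apply: (le_trans hi); apply: v_mono => //; apply/fintype.subsetP => x xQ.
    rewrite !inE xQ eqxx andbT; apply/bigcupP; by exists i.
  + apply: (le_trans (Hh' j hj)); apply: v_mono => //; apply/fintype.subsetP => x.
    rewrite !inE => /andP[/bigcupP[a aS' xa] /eqP hx].
    move: aS'; rewrite in_setD1 => /andP[ai aS].
    have xi : x \in Q i = false.
      by apply: (disjointFr (hD a i aS iS ai)) xa.
    rewrite xi hx eqxx andbT; apply/bigcupP; by exists a.
move=> nbig.
have small : forall i, i \in S -> v (Q i) < t.
  move=> i iS; rewrite ltNge; apply/negP => h; move/negP: nbig; apply.
  by apply/existsP; exists i; rewrite iS h.
case: (boolP [exists a in S, exists b in S, (a != b) && (v (Q a) + v (Q b) <= 2 * u - t)]).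
-
  move/existsP => [a /andP[aS /existsP[b /andP[bS /andP[ab hab]]]]].
  pose Q' := fun i => if i == a then Q a :|: Q b else Q i.
  have hS' : #|S :\ b| = m by move: hS; rewrite (cardsD1 b) bS => -[].
  have aS' : a \in S :\ b by rewrite in_setD1 ab aS.
  have [||h' Hh'] := IH (S :\ b) Q' g.+1 hS' (ltnW hN).
  + move=> i j; rewrite !in_setD1 => /andP[ib iS] /andP[jb jS] ij; rewrite /Q'.
    case: ifP => [/eqP ia|ia]; case: ifP => [/eqP ja|ja].
    * by rewrite ia ja eqxx in ij.
    * subst i; rewrite finset.disjoints_subset finset.subUset -!finset.disjoints_subset; apply/andP; split; apply: hD => //; by rewrite eq_sym.
    * subst j; rewrite disjoint_sym finset.disjoints_subset finset.subUset -!finset.disjoints_subset; apply/andP; split; apply: hD => //; by rewrite eq_sym.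
    * by apply: hD.
  + have e1 : \sum_(i in S) cost u (v (Q i)) = cost u (v (Q b)) +
        (cost u (v (Q a)) + \sum_(i in S :\ b :\ a) cost u (v (Q i))).
      by rewrite (big_setD1 b bS) (big_setD1 a aS').
    have e2 : \sum_(i in S :\ b) cost u (v (Q' i)) = cost u (v (Q' a)) +
        \sum_(i in S :\ b :\ a) cost u (v (Q' i)).
      by rewrite (big_setD1 a aS').
    rewrite e2; move: hc; rewrite e1 {1}/Q' eqxx.
    have -> : \sum_(i in S :\ b :\ a) cost u (v (Q' i)) = \sum_(i in S :\ b :\ a) cost u (v (Q i)).
      by apply: eq_bigr => i; rewrite !in_setD1 /Q' => /andP[/negbTE -> _].
    rewrite (add_disj Hadd (hD a b aS bS ab)).
    rewrite (cost_lt (small a aS)) (cost_lt (small b bS)) eS.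
    have hh0 : cost u (v (Q a) + v (Q b)) <= 0 \/
               cost u (v (Q a) + v (Q b)) <= u - (v (Q a) + v (Q b)).
      by rewrite /cost; case: ifP => _; [right|left].
    have eg : (g.+1%:R : R) = g%:R + 1 by rewrite -natr1.
    rewrite eg !mulrBl mulrDl mul1r.
    clear e1 e2; set s := \sum_(i in _) _.
    set mt := m%:R * t; set gt := g%:R * t.
    by case: hh0 => hh hc'; have := hab; have := htu; have := hc'; have := hh; clear; lra.
  exists h' => j hj; apply: (le_trans (Hh' j hj)); apply: v_mono => //.
  apply: finset.setSI; apply/fintype.subsetP => x /bigcupP[i iS' xi].
  move: iS'; rewrite in_setD1 => /andP[_ iS].
  apply/bigcupP; move: xi; rewrite /Q'; case: (eqVneq i a) => [_|_] xi; last by exists i.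
  by move: xi; rewrite finset.in_setU => /orP[xi|xi]; [exists a | exists b].
move=> npair.
have big2 : forall a b, a \in S -> b \in S -> a != b -> 2 * u - t < v (Q a) + v (Q b).
  move=> a b aS bS ab; rewrite ltNge; apply/negP => h; move/negP: npair; apply.
  by apply/existsP; exists a; rewrite aS; apply/existsP; exists b; rewrite bS ab h.
have h2g : (2 * g.+1 <= m.+1)%N.
  rewrite leqNgt; apply/negP => lt.
  have := H4 hN lt.
  have : m.+1%:R * (u - t) <= \sum_(i in S) cost u (v (Q i)).
    rewrite -hS mulr_natl -sumr_const; apply: ler_sum => i iS.
    rewrite (cost_lt (small i iS)); have := small i iS; lra.
  lra.
have [i0 i0S] : exists i0, i0 \in S by apply/card_gt0P; rewrite hS.
pose e := enum S.
have ue : uniq e by apply: enum_uniq.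
have se : size e = m.+1 by rewrite -cardE.
have de : forall a b, a \in e -> b \in e -> a != b -> [disjoint Q a & Q b].
  by move=> a b; rewrite !mem_enum; apply: hD.
exists (fun x => (find (fun a => x \in Q a) e)./2) => j hj.
have l1 : (j.*2 < size e)%N by rewrite se; move: hj h2g; lia.
have l2 : (j.*2.+1 < size e)%N by rewrite se; move: hj h2g; lia.
have aS : nth i0 e j.*2 \in S by rewrite -mem_enum mem_nth.
have bS : nth i0 e j.*2.+1 \in S by rewrite -mem_enum mem_nth.
have ab : nth i0 e j.*2 != nth i0 e j.*2.+1 by rewrite nth_uniq // neq_ltn ltnSn.
have := big2 _ _ aS bS ab.
rewrite -(add_disj Hadd (hD _ _ aS bS ab)) => hv.
have : t <= v (Q (nth i0 e j.*2) :|: Q (nth i0 e j.*2.+1)) by have := hv; have := htu; clear; lra.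
move/le_trans; apply; apply: v_mono => //; apply/fintype.subsetP => x.
rewrite finset.in_setU => /orP[xa|xb]; rewrite !inE.
- rewrite (find_eq ue de l1 xa) doubleK eqxx andbT; apply/bigcupP; by exists (nth i0 e j.*2).
- have hj2 : (j.*2.+1)./2 = j by rewrite /= uphalf_double.
  rewrite (find_eq ue de l2 xb) hj2 eqxx andbT; apply/bigcupP; by exists (nth i0 e j.*2.+1).
Qed.

End Comb.
Section Main.
Context {R : realType} {T : finType} (v : {set T} -> R) (Hv : valuation v).

Lemma sub_case (sub : subadditive_valuation v) n (f0 : {ffun T -> 'I_n}) mu
  (Hf0 : forall j, mu <= v (part f0 j)) k (hk : (k < n)%N) (B : 'I_k -> {set T}) t
  (ht : t <= mu - v (\bigcup_(i < k) B i)) :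
  exists g : {ffun T -> 'I_(n - k)}, forall j,
    t <= v ([set x in ~: \bigcup_(i < k) B i] :&: part g j).
Proof.
have hp : (0 < n - k)%N by rewrite subn_gt0.
apply: (final_step Hv hp (h := fun x => nat_of_ord (f0 x))) => j hj.
have jn : (j < n)%N by move: hj; lia.
set W := \bigcup_(i < k) B i.
have e : [set x | nat_of_ord (f0 x) == j] = part f0 (Ordinal jn).
  by apply/setP => x; rewrite /part !inE.
rewrite e.
have h1 := Hf0 (Ordinal jn).
have h2 : v (part f0 (Ordinal jn)) <= v ([set x in ~: W] :&: part f0 (Ordinal jn)) + v W.
  apply: le_trans (sub _ _); apply: v_mono => //; apply/fintype.subsetP => x xp.
  by rewrite finset.in_setU finset.in_setI xp andbT; case xW : (x \in W); rewrite ?orbT // inE finset.in_setC xW.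
by have := ht; have := h1; have := h2; clear; lra.
Qed.

Lemma ratio_facts (a b : nat) (hb : (0 < b)%N) :
  [/\ (a <= b)%N -> (a%:R / b%:R : R) <= 1,
      (2 * b <= 3 * a)%N -> 2 / 3 <= (a%:R / b%:R : R) &
      forall m g : nat, (2 * m * a <= m * b + g * a)%N ->
        (2 * m%:R - g%:R) * (a%:R / b%:R : R) <= m%:R].
Proof.
have hb' : (0 : R) < b%:R by rewrite ltr0n.
split.
- by move=> h; rewrite ler_pdivrMr // mul1r ler_nat.
- move=> h; rewrite ler_pdivlMr //.
  have : ((2 * b)%:R <= (3 * a)%:R :> R) by rewrite ler_nat.
  rewrite !natrM => h'; lra.
- move=> m g h; rewrite mulrA ler_pdivrMr //.
  have : ((2 * m * a)%:R <= (m * b + g * a)%:R :> R) by rewrite ler_nat.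
  rewrite natrD !natrM => h'; nra.
Qed.

Lemma rho_facts n (hn : (1 <= n)%N) :
  [/\ @rho R n <= 1, 2 / 3 <= @rho R n &
      forall m g : nat, (m <= n)%N -> (m < 2 * g)%N ->
        (2 * m%:R - g%:R) * @rho R n <= m%:R].
Proof.
rewrite /rho; case: ifP => hodd.
- have hb : (0 < 3 * n - 1)%N by lia.
  have [f1 f2 f3] := ratio_facts (2 * n) hb.
  split; [apply: f1; lia | apply: f2; lia | move=> m g hm hg; apply: f3; nia].
- have n2 : (2 <= n)%N.
    by case: n hn hodd => [|[|n]] //.
  have [q hq] : exists q, n = (2 * q)%N.
    exists n./2; have := odd_double_half n; rewrite hodd add0n -muln2 mulnC => ->; done.
  have hb : (0 < 3 * n - 4)%N by lia.
  have [f1 f2 f3] := ratio_facts (2 * n - 2) hb.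
  split; [apply: f1; lia | apply: f2; lia | move=> m g hm hg; apply: f3].
  have [h|h] : (m + 2 <= 2 * g)%N \/ (2 * g = m + 1 /\ m + 1 <= n)%N by lia.
  + nia.
  + nia.
Qed.

End Main.
Unset Implicit Arguments.

Theorem mainTheorem4 (R : realType) (T : finType) (n : nat) (v : {set T} -> R) :
  (1 <= n)%N -> valuation v ->
  (subadditive_valuation v -> RMMS v n >= n%:R^-1 * MMS v n) /\
  (additive_valuation v ->
     RMMS v n >= @rho R n * MMS v n /\ RMMS v n >= 2 / 3 * MMS v n).
Proof.
move=> hn Hv.
have [f0 [hf0 hM0]] := MMS_attained Hv hn.
set mu := MMS v n in hf0 hM0 *.
have Hf0 : forall j, mu <= v (part f0 j) by move=> j; apply: le_trans hf0 (pmin_le Hv f0 j).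
have hn' : (0 : R) < n%:R by rewrite ltr0n.
split.
- move=> sub; apply: (RMMS_ge Hv hn) => k hk B _ hB.
  apply: (sub_case Hv sub Hf0 hk).
  set c := n%:R^-1 * mu.
  have c0 : 0 <= c by apply: mulr_ge0 => //; rewrite invr_ge0 ltW.
  have cn : c * n%:R = mu by rewrite /c mulrAC mulVf ?mul1r // gt_eqF.
  have hU := union_bound Hv sub B.
  have hs : \sum_(i < k) v (B i) <= k%:R * c.
    have : \sum_(i < k) v (B i) <= \sum_(i < k) c by apply: ler_sum => i _; apply: ltW.
    by rewrite sumr_const card_ord mulr_natl.
  have hk' : (k.+1%:R : R) <= n%:R by rewrite ler_nat.
  have hkc : k.+1%:R * c <= n%:R * c by apply: ler_wpM2r.
  have ek : (k.+1%:R : R) = k%:R + 1 by rewrite -natr1.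
  rewrite ek mulrDl mul1r (mulrC n%:R) cn in hkc.
  by have := hU; have := hs; have := hkc; clear; lra.
- move=> Hadd.
  have [r1 r23 r4] := rho_facts (R := R) hn.
  have main : @rho R n * mu <= RMMS v n.
    apply: (RMMS_ge Hv hn) => k hk B _ hB.
    set t := @rho R n * mu.
    have t0 : 0 <= t by apply: mulr_ge0 => //; apply: le_trans r23; lra.
    have tu : t <= mu by rewrite /t -[X in _ <= X]mul1r; apply: ler_wpM2r.
    case: k hk B hB => [|k] hk B hB.
      apply: (sub_case Hv (add_sub Hv Hadd) Hf0 hk).
      rewrite big_ord0; have -> : v finset.set0 = 0 by case: Hv.
      by rewrite subr0.
    set W := \bigcup_(i < k.+1) B i.
    set U := [set x in ~: W].
    have hp : (0 < n - k.+1)%N by rewrite subn_gt0.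
    pose Q := fun j : 'I_n => U :&: part f0 j.
    have H4 : forall m g : nat, (m <= n)%N -> (m < 2 * g)%N ->
        (m%:R - g%:R) * t <= m%:R * (mu - t).
      move=> m g hm hg; have := r4 m g hm hg => hr.
      rewrite -subr_ge0 /t.
      rewrite (_ : m%:R * (mu - rho n * mu) - (m%:R - g%:R) * (rho n * mu) =
                   mu * (m%:R - (2 * m%:R - g%:R) * rho n)); last by ring.
      by apply: mulr_ge0 => //; rewrite subr_ge0.
    have hdis : forall i j, i \in [set: 'I_n] -> j \in [set: 'I_n] -> i != j ->
        [disjoint Q i & Q j].
      move=> i j _ _ ij; rewrite -setI_eq0; apply/eqP/setP => x.
      rewrite /Q /part !inE; apply/negP => /and3P[/andP[_ /eqP fi] _ /eqP fj].
      by move: ij; rewrite -fi -fj eqxx.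
    have hcost : \sum_(i in [set: 'I_n]) cost mu (v (Q i)) < (n%:R - (n - k.+1)%:R) * t.
      have e1 : forall j, v (part f0 j) = v (Q j) + v (part f0 j :&: W).
        move=> j; rewrite -(add_disj Hadd); last first.
          rewrite -setI_eq0; apply/eqP/setP => x; rewrite /Q !inE.
          by case: (x \in W); rewrite ?andbF.
        congr (v _); apply/setP => x; rewrite /Q !inE.
        by case: (x \in W); rewrite ?andbT ?andbF ?orbF.
      have e2 : \sum_(j in [set: 'I_n]) v (part f0 j :&: W) = v W.
        rewrite [v W]Hadd (partition_big (fun e => f0 e) (fun j => j \in [set: 'I_n])); last by move=> *; rewrite finset.in_setT.
        apply: eq_bigr => j _; rewrite Hadd; apply: eq_bigl => e.
        by rewrite /part !inE andbC.
      have e3 : v W < k.+1%:R * t.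
        apply: le_lt_trans (union_bound Hv (add_sub Hv Hadd) B) _.
        have : \sum_(i < k.+1) v (B i) < \sum_(i < k.+1) t.
          by apply: ltr_sum => //; apply/hasP; exists ord0; rewrite ?mem_index_enum.
        by rewrite sumr_const card_ord mulr_natl.
      apply: (@le_lt_trans _ _ (v W)).
        rewrite -e2; apply: ler_sum => j _.
        have := e1 j; have := Hf0 j; have := cost_le mu (v (Q j)).
        have := v_ge0 Hv (part f0 j :&: W); rewrite /cost; case: ifP => _; lra.
      rewrite natrB 1?ltnW // opprB addrC subrK; exact: e3.
    have cS : #|[set: 'I_n]| = n by rewrite cardsT card_ord.
    have [h Hh] := comb Hv Hadd t0 tu H4 (S := [set: 'I_n]) (Q := Q) (g := n - k.+1)
      cS (leqnn n) hdis hcost.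
    apply: (final_step Hv hp (h := h)) => j hj.
    apply: le_trans (Hh j hj) _; apply: v_mono => //; apply: finset.setSI.
    apply/fintype.subsetP => x /bigcupP[i _]; rewrite /Q finset.in_setI; by case/andP.
  split => //; apply: le_trans main; apply: ler_wpM2r => //.
Qed.
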